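(* Let $A\in\mathbb{C}^{N\times N}$ have separation index $I_s(A)=1$. Then the real Lie algebra generated by $A-A^\dagger$, $iA+iA^\dagger$ and $i[A,A^\dagger]$ is isomorphic to $\mathfrak{su}(2)$.
   Context: $\mathfrak{u}(N)$ is the real Lie algebra of skew-Hermitian $N\times N$ matrices. For $\Omega\in\mathfrak{u}(N)$ and $\varphi\in\mathbb{R}$, let $E_\varphi(\Omega)=\{X\in\mathbb{C}^{N\times N}\mid \Omega X-X\Omega=i\varphi X\}$ (a complex subspace). The separation index of $A$ is $I_s(A)=\min\{\dim_{\mathbb{C}}E_\varphi(\Omega)\mid A\in E_\varphi(\Omega),\ \Omega\in\mathfrak{u}(N),\ \varphi\in\mathbb{R},\ \varphi\neq 0\}$ (and $I_s(A)=-\infty$ if there is no such pair). $[X,Y]=XY-YX$. *)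

(* Defs.v *)
From HB Require Import structures.
From mathcomp Require Import all_boot all_order all_algebra.
From mathcomp Require Import reals complex.
Set Implicit Arguments. Unset Strict Implicit. Unset Printing Implicit Defensive.
Import Order.TTheory GRing.Theory Num.Theory.
Local Open Scope ring_scope.
Local Open Scope complex_scope.

Section Defs.
Variable R : realType.
Local Notation C := R[i].

Definition adjmx (n : nat) (A : 'M[C]_n) : 'M[C]_n := (map_mx Num.conj A)^T.

Definition lie_br (n : nat) (X Y : 'M[C]_n) : 'M[C]_n := X *m Y - Y *m X.

Definition skew_herm (n : nat) (X : 'M[C]_n) : Prop := adjmx X = - X.

Definition Espace (n : nat) (Om : 'M[C]_n) (phi : R) : {vspace 'M[C]_n} :=
  lker (linfun (fun X : 'M[C]_n => Om *m X - X *m Om - ('i * phi%:C) *: X)).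

Definition sep_admissible (n : nat) (A Om : 'M[C]_n) (phi : R) : Prop :=
  skew_herm Om /\ phi != 0 /\ A \in Espace Om phi.

(* I_s(A) = k  (k a natural number): k is the minimum of dim_C E_phi(Omega)
   over admissible pairs (in particular, the set of admissible pairs is
   nonempty, so I_s(A) <> -oo). *)
Definition sep_index_eq (n : nat) (A : 'M[C]_n) (k : nat) : Prop :=
  (exists Om phi, sep_admissible A Om phi /\ \dim (Espace Om phi) = k) /\
  (forall Om phi, sep_admissible A Om phi -> (k <= \dim (Espace Om phi))%N).

Definition real_lie_subalg (n : nat) (S : 'M[C]_n -> Prop) : Prop :=
  S 0 /\
  (forall X Y, S X -> S Y -> S (X + Y)) /\
  (forall (r : R) X, S X -> S (r%:C *: X)) /\
  (forall X Y, S X -> S Y -> S (lie_br X Y)).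

Definition gen_real_lie (n : nat) (G : 'M[C]_n -> Prop) (X : 'M[C]_n) : Prop :=
  forall S, real_lie_subalg S -> (forall Y, G Y -> S Y) -> S X.

Definition su2 (X : 'M[C]_2) : Prop := skew_herm X /\ \tr X = 0.

Definition real_lie_iso (n m : nat) (L : 'M[C]_n -> Prop) (M : 'M[C]_m -> Prop)
  : Prop :=
  exists f : 'M[C]_n -> 'M[C]_m,
    (forall X, L X -> M (f X)) /\
    (forall X Y, L X -> L Y -> f X = f Y -> X = Y) /\
    (forall Z, M Z -> exists X, L X /\ f X = Z) /\
    (forall (r s : R) X Y, L X -> L Y ->
        f (r%:C *: X + s%:C *: Y) = r%:C *: f X + s%:C *: f Y) /\
    (forall X Y, L X -> L Y -> f (lie_br X Y) = lie_br (f X) (f Y)).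

End Defs.

(* Main.v *)
Require Import Defs.
From HB Require Import structures.
From mathcomp Require Import all_boot all_order all_algebra.
From mathcomp Require Import reals complex ring lra.
Import Order.TTheory GRing.Theory Num.Theory.
Local Open Scope ring_scope.
Local Open Scope complex_scope.
Set Implicit Arguments. Unset Strict Implicit. Unset Printing Implicit Defensive.

Section Aux.
Variable R : realType.
Local Notation C := R[i].
Local Notation cj := (@Num.conj C).

Lemma adjmxK n (X : 'M[C]_n) : adjmx (adjmx X) = X.
Proof. by apply/matrixP=> i j; rewrite /adjmx !mxE conjCK. Qed.

Lemma adjmxM n (X Y : 'M[C]_n) : adjmx (X *m Y) = adjmx Y *m adjmx X.
Proof. by rewrite /adjmx map_mxM trmx_mul. Qed.

Lemma adjmxD n (X Y : 'M[C]_n) : adjmx (X + Y) = adjmx X + adjmx Y.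
Proof. by apply/matrixP=> i j; rewrite /adjmx !mxE rmorphD. Qed.

Lemma adjmxN n (X : 'M[C]_n) : adjmx (- X) = - adjmx X.
Proof. by apply/matrixP=> i j; rewrite /adjmx !mxE rmorphN. Qed.

Lemma adjmxB n (X Y : 'M[C]_n) : adjmx (X - Y) = adjmx X - adjmx Y.
Proof. by rewrite adjmxD adjmxN. Qed.

Lemma adjmxZ n (c : C) (X : 'M[C]_n) : adjmx (c *: X) = cj c *: adjmx X.
Proof. by apply/matrixP=> i j; rewrite /adjmx !mxE rmorphM. Qed.

Lemma adjmx0 n : adjmx (0 : 'M[C]_n) = 0.
Proof. by apply/matrixP=> i j; rewrite /adjmx !mxE rmorph0. Qed.

Lemma conj_iC : cj ('i : C) = - 'i.
Proof. have := conjCi C; rewrite -complexiE; exact. Qed.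

Lemma conj_realC (r : R) : cj (r%:C : C) = r%:C.
Proof. by apply: conj_Creal; apply/complex_realP; exists r. Qed.

Lemma trace_adj n (X : 'M[C]_n) :
  \tr (X *m adjmx X) = \sum_i \sum_j X i j * cj (X i j).
Proof.
rewrite /mxtrace; apply: eq_bigr => i _; rewrite mxE; apply: eq_bigr => j _.
by rewrite /adjmx !mxE.
Qed.

Lemma trace_adj_ge0 n (X : 'M[C]_n) : 0 <= \tr (X *m adjmx X).
Proof.
rewrite trace_adj; apply: sumr_ge0 => i _; apply: sumr_ge0 => j _.
exact: mul_conjC_ge0.
Qed.

Lemma trace_adj_eq0 n (X : 'M[C]_n) : \tr (X *m adjmx X) = 0 -> X = 0.
Proof.
rewrite trace_adj => /eqP; rewrite psumr_eq0 => [/allP H|i _]; last first.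
  by apply: sumr_ge0 => j _; exact: mul_conjC_ge0.
apply/matrixP=> i j; rewrite mxE.
have /implyP := H i (mem_index_enum _) => /(_ isT).
rewrite psumr_eq0 => [/allP H2|k _]; last exact: mul_conjC_ge0.
have /implyP := H2 j (mem_index_enum _) => /(_ isT) /eqP.
by move/eqP; rewrite -normCK sqrf_eq0 normr_eq0 => /eqP.
Qed.

Lemma trace_adj_gt0 n (X : 'M[C]_n) : X != 0 -> 0 < \tr (X *m adjmx X).
Proof.
move=> nz; rewrite lt_def trace_adj_ge0 andbT; apply/eqP => /trace_adj_eq0.
by move/eqP: nz.
Qed.

Definition adf n (Om : 'M[C]_n) (phi : R) (X : 'M[C]_n) :=
  Om *m X - X *m Om - ('i * phi%:C) *: X.
Arguments adf {n}.

Lemma zmod6 (V : zmodType) (p u q v r w : V) :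
  p + u - (q + v) - (r + w) = p - q - r + (u - v - w).
Proof.
rewrite !opprD !addrA (addrAC p u (-q)) (addrAC (p-q+u) (-v) (-r)).
by rewrite (addrAC (p-q) u (-r)).
Qed.

Lemma adf_lin n (Om : 'M[C]_n) phi : linear (adf Om phi).
Proof.
move=> a X Y; rewrite /adf mulmxDr mulmxDl scalerDr !scalerBr scalemxAr scalemxAl.
rewrite [X in _ - (X + _)]scalerA [in RHS]scalerA [_ * a]mulrC.
exact: zmod6.
Qed.



HB.instance Definition _ n Om phi :=
  GRing.isLinear.Build C 'M[C]_n 'M[C]_n *:%R (@adf n Om phi) (@adf_lin n Om phi).

Lemma memE n (Om X : 'M[C]_n) phi :
  (X \in Espace Om phi) = (Om *m X - X *m Om == ('i * phi%:C) *: X).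
Proof.
have -> : Espace Om phi = lker (linfun (adf Om phi)) by [].
by rewrite memv_ker lfunE /= /adf subr_eq0.
Qed.


Lemma brDl n (X Y Z : 'M[C]_n) : lie_br (X + Y) Z = lie_br X Z + lie_br Y Z.
Proof. by rewrite /lie_br mulmxDl mulmxDr opprD addrACA. Qed.
Lemma brDr n (X Y Z : 'M[C]_n) : lie_br Z (X + Y) = lie_br Z X + lie_br Z Y.
Proof. by rewrite /lie_br mulmxDl mulmxDr opprD addrACA. Qed.
Lemma brZl n c (X Y : 'M[C]_n) : lie_br (c *: X) Y = c *: lie_br X Y.
Proof. by rewrite /lie_br scalerBr scalemxAl scalemxAr. Qed.
Lemma brZr n c (X Y : 'M[C]_n) : lie_br X (c *: Y) = c *: lie_br X Y.
Proof. by rewrite /lie_br scalerBr scalemxAr scalemxAl. Qed.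
Lemma brN n (X Y : 'M[C]_n) : lie_br X Y = - lie_br Y X.
Proof. by rewrite /lie_br opprB. Qed.
Lemma brxx n (X : 'M[C]_n) : lie_br X X = 0.
Proof. by rewrite /lie_br subrr. Qed.

Section Gen.
Variables (n : nat) (A : 'M[C]_n) (mu : C).
Hypotheses (A0 : A != 0) (AA : A *m A = 0)
  (ADA : A *m adjmx A *m A = mu *: A) (mu_gt0 : 0 < mu).
Local Notation D := (adjmx A).
Local Notation H := (lie_br A (adjmx A)).

Definition gg u v w := u *: A + v *: D + w *: H.

Lemma mu_neq0 : mu != 0. Proof. exact: lt0r_neq0. Qed.
Lemma mu_conj : cj mu = mu. Proof. exact: conj_Creal (gtr0_real mu_gt0). Qed.

Lemma DD : D *m D = 0. Proof. by rewrite -adjmxM AA adjmx0. Qed.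
Lemma DAD : D *m A *m D = mu *: D.
Proof.
have := congr1 (@adjmx R n) ADA.
by rewrite !adjmxM adjmxK adjmxZ mu_conj mulmxA.
Qed.

Lemma brAH : lie_br A H = (- (2%:R * mu)) *: A.
Proof.
rewrite /lie_br mulmxBr mulmxBl !mulmxA AA mul0mx ADA.
rewrite -[D *m A *m A]mulmxA AA mulmx0 sub0r subr0.
by rewrite scaleNr mulr_natl mulr2n scalerDl opprD.
Qed.

Lemma brDH : lie_br D H = (2%:R * mu) *: D.
Proof.
rewrite /lie_br mulmxBr mulmxBl !mulmxA DD mul0mx DAD.
rewrite -[A *m D *m D]mulmxA DD mulmx0 subr0 sub0r opprK.
by rewrite mulr_natl mulr2n scalerDl.
Qed.

Lemma brA_g u v w : lie_br A (gg u v w) = gg (- (2%:R * mu) * w) 0 v.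
Proof.
rewrite /gg !brDr !brZr brxx brAH scaler0 scale0r add0r addr0 scalerA.
by rewrite addrC mulrC.
Qed.

Lemma brD_g u v w : lie_br D (gg u v w) = gg 0 (2%:R * mu * w) (- u).
Proof.
rewrite /gg !brDr !brZr brxx brDH scaler0 scale0r addr0 add0r scalerA.
rewrite [lie_br D A]brN scalerN scaleNr addrC.
by rewrite mulrC.
Qed.

Lemma brH_g u v w : lie_br H (gg u v w) = gg (2%:R * mu * u) (- (2%:R * mu) * v) 0.
Proof.
rewrite /gg !brDr !brZr brxx [lie_br H A]brN [lie_br H D]brN brAH brDH.
rewrite scaler0 scale0r !addr0 scaleNr opprK !scalerN !scalerA -scaleNr.
by rewrite [u * _]mulrC [v * _]mulrC mulNr.
Qed.

Lemma gD u v w u' v' w' :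
  gg u v w + gg u' v' w' = gg (u + u') (v + v') (w + w').
Proof. by rewrite /gg !scalerDl addrACA (addrACA (u *: A)). Qed.

Lemma gZ k u v w : k *: gg u v w = gg (k * u) (k * v) (k * w).
Proof. by rewrite /gg !scalerDr !scalerA. Qed.

Lemma g0 : gg 0 0 0 = 0.
Proof. by rewrite /gg !scale0r !addr0. Qed.

Lemma br_g u v w u' v' w' :
  lie_br (gg u v w) (gg u' v' w') =
  gg (2%:R * mu * (w * u' - u * w')) (2%:R * mu * (v * w' - w * v'))
     (u * v' - v * u').
Proof.
rewrite {1}/gg !brDl !brZl brA_g brD_g brH_g !gZ !gD.
by congr gg; ring.
Qed.


Lemma trA : \tr A = 0.
Proof.
have h : \tr (mu *: A) = 0.
  by rewrite -ADA mxtrace_mulC mulmxA AA mul0mx mxtrace0.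
by move: h; rewrite mxtraceZ => /eqP; rewrite mulf_eq0 (negbTE mu_neq0) /= => /eqP.
Qed.

Lemma trD : \tr D = 0.
Proof.
have h : \tr (mu *: D) = 0.
  by rewrite -DAD mxtrace_mulC mulmxA DD mul0mx mxtrace0.
by move: h; rewrite mxtraceZ => /eqP; rewrite mulf_eq0 (negbTE mu_neq0) /= => /eqP.
Qed.

Lemma trH : \tr H = 0.
Proof. by rewrite /lie_br raddfB /= mxtrace_mulC subrr. Qed.

Definition trt := \tr (A *m D).

Lemma tt_gt0 : 0 < trt.
Proof. exact: trace_adj_gt0. Qed.

Lemma tt_neq0 : trt != 0.
Proof. exact: lt0r_neq0 tt_gt0. Qed.

Lemma tr_g u v w : \tr (gg u v w) = 0.
Proof. by rewrite /gg raddfD raddfD /= !mxtraceZ trA trD trH !mulr0 !addr0. Qed.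

Lemma tr_gD u v w : \tr (gg u v w *m D) = u * trt.
Proof.
rewrite /gg mulmxDl mulmxDl -!scalemxAl raddfD raddfD /= !mxtraceZ DD mxtrace0.
rewrite /lie_br mulmxBl raddfB /= -mulmxA DD mulmx0 mxtrace0 DAD mxtraceZ trD.
by rewrite !mulr0 subrr mulr0 !addr0.
Qed.

Lemma tr_gA u v w : \tr (gg u v w *m A) = v * trt.
Proof.
rewrite /gg mulmxDl mulmxDl -!scalemxAl !raddfD /= !mxtraceZ AA mxtrace0.
rewrite /lie_br mulmxBl raddfB /= -[D *m A *m A]mulmxA AA mulmx0 mxtrace0 ADA mxtraceZ trA.
by rewrite !mulr0 subrr mulr0 add0r addr0 mxtrace_mulC.
Qed.

Lemma tr_gH u v w : \tr (gg u v w *m H) = w * (2%:R * mu * trt).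
Proof.
have e1 : A *m D *m A *m D = mu *: (A *m D) by rewrite ADA scalemxAl.
have e2 : A *m D *m D *m A = 0 by rewrite -(mulmxA A) DD mulmx0 mul0mx.
have e3 : D *m A *m A *m D = 0 by rewrite -(mulmxA D) AA mulmx0 mul0mx.
have e4 : D *m A *m D *m A = mu *: (D *m A) by rewrite DAD scalemxAl.
have hAH : \tr (A *m H) = 0.
  by rewrite /lie_br mulmxBr raddfB /= !mulmxA AA mul0mx ADA mxtrace0 mxtraceZ trA mulr0 subrr.
have hDH : \tr (D *m H) = 0.
  by rewrite /lie_br mulmxBr raddfB /= !mulmxA DD mul0mx DAD mxtrace0 mxtraceZ trD mulr0 subrr.
have hHH : \tr (H *m H) = 2%:R * mu * trt.
  rewrite {1}/lie_br mulmxBl /lie_br !mulmxBr !mulmxA e1 e2 e3 e4 !raddfB /= !mxtraceZ mxtrace0.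
  by rewrite [\tr (D *m A)]mxtrace_mulC -/trt; ring.
by rewrite /gg mulmxDl mulmxDl -!scalemxAl raddfD raddfD /= !mxtraceZ hAH hDH hHH !mulr0 !add0r.
Qed.

Lemma g_inj u v w u' v' w' : gg u v w = gg u' v' w' -> [/\ u = u', v = v' & w = w'].
Proof.
move=> e; split.
- by have := congr1 (fun X => \tr (X *m D)) e; rewrite /= !tr_gD; exact: (mulIf tt_neq0).
- by have := congr1 (fun X => \tr (X *m A)) e; rewrite /= !tr_gA; exact: (mulIf tt_neq0).
- have h : 2%:R * mu * trt != 0.
    by rewrite !mulf_neq0 ?tt_neq0 ?mu_neq0 // pnatr_eq0.
  by have := congr1 (fun X => \tr (X *m H)) e; rewrite /= !tr_gH; exact: (mulIf h).
Qed.

Lemma adjH : adjmx H = H.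
Proof. by rewrite /lie_br adjmxB !adjmxM adjmxK. Qed.

Lemma adj_g u v w : adjmx (gg u v w) = gg (cj v) (cj u) (cj w).
Proof.
rewrite /gg !adjmxD !adjmxZ adjmxK adjH; congr (_ + _); exact: addrC.
Qed.

End Gen.

Lemma leib n (Om X Y : 'M[C]_n) :
  Om *m (X *m Y) - X *m Y *m Om =
  (Om *m X - X *m Om) *m Y + X *m (Om *m Y - Y *m Om).
Proof. by rewrite mulmxBl mulmxBr !mulmxA addrA subrK. Qed.

Lemma iC_neq0 : ('i : C) != 0.
Proof. have := neq0Ci C; rewrite -complexiE; exact. Qed.

Lemma key N (A : 'M[C]_N) : sep_index_eq A 1 ->
  exists mu, [/\ A != 0, A *m A = 0, A *m adjmx A *m A = mu *: A & 0 < mu].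
Proof.
case=> [[Om [phi [[skOm [phi0 AE]] dimE]]] minE].
set c := ('i * phi%:C : C).
have c0 : c != 0.
  rewrite mulf_neq0 ?iC_neq0 //; apply/eqP => h; move/eqP: phi0; apply.
  exact: (@complexI R).
have A0 : A != 0.
  apply/eqP => A0.
  have adm : sep_admissible A 0 phi.
    split; first by rewrite /skew_herm adjmx0 oppr0.
    by split; [exact: phi0 | rewrite A0 mem0v].
  have := minE _ _ adm.
  have -> : Espace (0 : 'M_N) phi = 0%VS.
    apply/vspaceP => X; rewrite memE memv0 mul0mx mulmx0 subrr eq_sym scaler_eq0.
    by rewrite -/c (negbTE c0).
  by rewrite dimv0.
have EA : Espace Om phi = <[A]>%VS.
  by apply/eqP; rewrite eq_sym eqEdim -memvE AE dim_vline A0 dimE.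
have inE X : X \in Espace Om phi -> exists k, X = k *: A.
  by rewrite EA => /vlineP.
move: (AE); rewrite memE -/c => /eqP hA.
have hD : Om *m adjmx A - adjmx A *m Om = (- c) *: adjmx A.
  have := congr1 (@adjmx R N) hA.
  rewrite adjmxB !adjmxM adjmxZ skOm mulmxN mulNmx opprK addrC.
  by rewrite rmorphM /= conj_iC conj_realC mulNr.
have : A *m Om \in Espace Om phi.
  by rewrite memE leib hA subrr mulmx0 addr0 -scalemxAl.
move=> /inE [al hal].
have hOA : Om *m A = (c + al) *: A by rewrite scalerDl -hal -hA subrK.
have AA : A *m A = 0.
  have e := mulmxA A Om A.
  rewrite hOA hal -scalemxAr -scalemxAl in e.
  move/eqP: e; rewrite scalerDl -subr_eq0 addrK scaler_eq0 (negbTE c0) /=.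
  by move/eqP.
have : A *m adjmx A *m A \in Espace Om phi.
  rewrite memE leib leib hA hD -scalemxAl -!scalemxAr scaleNr subrr mul0mx add0r.
  by rewrite -/c.
move=> /inE [mu hmu].
exists mu; split => //.
have ADn0 : A *m adjmx A != 0.
  apply/eqP => h; have := trace_adj_gt0 A0; rewrite h mxtrace0.
  by rewrite ltxx.
have e : \tr (A *m adjmx A *m adjmx (A *m adjmx A)) = mu * \tr (A *m adjmx A).
  by rewrite adjmxM adjmxK mulmxA hmu -scalemxAl mxtraceZ.
have p1 := trace_adj_gt0 ADn0.
rewrite e in p1.
by rewrite -(pmulr_lgt0 _ (trace_adj_gt0 A0)).
Qed.


Definition good n (A : 'M[C]_n) mu :=
  [/\ A != 0, A *m A = 0, A *m adjmx A *m A = mu *: A & 0 < mu].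

Definition i0 : 'I_2 := ord0.
Definition i1 : 'I_2 := ord_max.

Lemma n01 : (i0 == i1) = false. Proof. by []. Qed.
Lemma n10 : (i1 == i0) = false. Proof. by []. Qed.

Lemma ord2 (a : 'I_2) : a = i0 \/ a = i1.
Proof. by case: a => [[|[|k]] Hk] //; [left|right]; apply: val_inj. Qed.

Lemma adj_delta (a b : 'I_2) : adjmx (delta_mx a b : 'M[C]_2) = delta_mx b a.
Proof. by apply/matrixP => x y; rewrite /adjmx !mxE rmorph_nat andbC. Qed.

Lemma mulZZ n (a b : C) (X Y : 'M[C]_n) : (a *: X) *m (b *: Y) = (a * b) *: (X *m Y).
Proof. by rewrite -scalemxAl -scalemxAr scalerA. Qed.

Definition A2 (mu : C) : 'M[C]_2 := sqrtC mu *: delta_mx i0 i1.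

Section Model.
Variables (mu : C) (mu_gt0 : 0 < mu).
Local Notation s := (sqrtC mu).

Lemma s_real : cj s = s.
Proof. exact: conj_Creal (sqrtC_real (ltW mu_gt0)). Qed.
Lemma ss : s * s = mu.
Proof. by rewrite -expr2 sqrtCK. Qed.
Lemma s0 : s != 0.
Proof. by rewrite sqrtC_eq0 (lt0r_neq0 mu_gt0). Qed.

Lemma D2 : adjmx (A2 mu) = s *: delta_mx i1 i0.
Proof. by rewrite /A2 adjmxZ s_real adj_delta. Qed.

Lemma good2 : good (A2 mu) mu.
Proof.
split => //.
- apply/eqP => h; have := congr1 (fun M : 'M[C]_2 => M i0 i1) h.
  rewrite /A2 !mxE !eqxx /= mulr1 => e; move: s0; by rewrite e eqxx.
- by rewrite /A2 mulZZ mul_delta_mx_0 ?scaler0.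
- by rewrite D2 /A2 !mulZZ !mul_delta_mx ss scalerA.
Qed.

Lemma H2 : lie_br (A2 mu) (adjmx (A2 mu)) = mu *: (delta_mx i0 i0 - delta_mx i1 i1).
Proof. by rewrite /lie_br D2 /A2 !mulZZ !mul_delta_mx ss scalerBr. Qed.

Lemma g2E u v w : gg (A2 mu) u v w =
  (u * s) *: delta_mx i0 i1 + (v * s) *: delta_mx i1 i0 +
  (w * mu) *: (delta_mx i0 i0 - delta_mx i1 i1).
Proof. by rewrite /gg H2 D2 /A2 !scalerA. Qed.

Lemma su2_g (Z : 'M[C]_2) : su2 Z ->
  exists u w, cj w = - w /\ Z = gg (A2 mu) u (- cj u) w.
Proof.
case=> hZ trZ.
have ent a b : cj (Z b a) = - Z a b.
  by have := congr1 (fun M : 'M[C]_2 => M a b) hZ; rewrite /adjmx !mxE.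
have tr0 : Z i0 i0 + Z i1 i1 = 0.
  move: trZ; rewrite /mxtrace big_ord_recl big_ord1.
  have -> : lift ord0 (ord0 : 'I_1) = i1 by apply: val_inj.
  by [].
have mu0 : mu != 0 by exact: lt0r_neq0.
exists (Z i0 i1 / s), (Z i0 i0 / mu); split.
  by rewrite fmorph_div /= ent (conj_Creal (gtr0_real mu_gt0)) mulNr.
apply/matrixP => a b; rewrite g2E !mxE.
case: (ord2 a) => ->; case: (ord2 b) => ->; rewrite ?eqxx ?n01 ?n10 /=.
- rewrite !mulr0 !add0r subr0 mulr1; field; by rewrite ?mu0 ?s0.
- rewrite !mulr1 !mulr0 subr0 !addr0; field; by rewrite ?mu0 ?s0.
- rewrite fmorph_div /= s_real -[Z i1 i0]opprK -ent.
  field; by rewrite ?mu0 ?s0.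
- have z11 : Z i1 i1 = - Z i0 i0 by apply/eqP; rewrite -addr_eq0 addrC tr0.
  rewrite z11 fmorph_div /= s_real; field; by rewrite ?mu0 ?s0.
Qed.

End Model.

Lemma cdecomp (a b : R) : (a +i* b : C) = a%:C + 'i * b%:C.
Proof. by apply/eqP; rewrite eq_complex /=; apply/andP; split; apply/eqP; lra. Qed.


Section Wrap.
Variables (n : nat) (A : 'M[C]_n) (mu : C).
Hypothesis gA : good A mu.

Lemma w_br u v w u' v' w' :
  lie_br (gg A u v w) (gg A u' v' w') =
  gg A (2%:R * mu * (w * u' - u * w')) (2%:R * mu * (v * w' - w * v'))
     (u * v' - v * u').
Proof. by case: gA => A0 AA ADA mg; exact: (br_g AA ADA mg). Qed.

Lemma w_muc : cj mu = mu.
Proof. by case: gA => A0 AA ADA mg; exact: (mu_conj mg). Qed.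

Lemma w_inj u v w u' v' w' : gg A u v w = gg A u' v' w' -> [/\ u = u', v = v' & w = w'].
Proof. by case: gA => A0 AA ADA mg; exact: (g_inj A0 AA ADA mg). Qed.

Lemma w_tr u v w : \tr (gg A u v w) = 0.
Proof. by case: gA => A0 AA ADA mg; exact: (tr_g AA ADA mg). Qed.

Lemma w_trD u v w : \tr (gg A u v w *m adjmx A) = u * trt A.
Proof. by case: gA => A0 AA ADA mg; exact: (tr_gD AA ADA mg). Qed.
Lemma w_trA u v w : \tr (gg A u v w *m A) = v * trt A.
Proof. by case: gA => A0 AA ADA mg; exact: (tr_gA AA ADA mg). Qed.
Lemma w_trH u v w : \tr (gg A u v w *m lie_br A (adjmx A)) = w * (2%:R * mu * trt A).
Proof. by case: gA => A0 AA ADA mg; exact: (tr_gH AA ADA mg). Qed.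
Lemma w_trt : trt A != 0.
Proof. by case: gA => A0 AA ADA mg; exact: (tt_neq0 A0). Qed.
Lemma w_mu0 : mu != 0.
Proof. by case: gA => A0 AA ADA mg; exact: (lt0r_neq0 mg). Qed.

End Wrap.

Definition Sg n (A : 'M[C]_n) (X : 'M[C]_n) : Prop :=
  exists u w, cj w = - w /\ X = gg A u (- cj u) w.

Lemma Sg_sub n (A : 'M[C]_n) mu : good A mu -> real_lie_subalg (Sg A).
Proof.
move=> gA.
split; [|split; [|split]].
- exists 0, 0; split; first by rewrite rmorph0 oppr0.
  by rewrite rmorph0 oppr0 g0.
- move=> X Y [u [w [hw ->]]] [u' [w' [hw' ->]]]; exists (u + u'), (w + w'); split.
  + by rewrite rmorphD /= hw hw' opprD.
  + by rewrite gD rmorphD /= opprD.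
- move=> r X [u [w [hw ->]]]; exists (r%:C * u), (r%:C * w); split.
  + by rewrite rmorphM /= conj_realC hw mulrN.
  + by rewrite gZ rmorphM /= conj_realC mulrN.
- move=> X Y [u [w [hw ->]]] [u' [w' [hw' ->]]].
  rewrite (w_br gA).
  exists (2%:R * mu * (w * u' - u * w')), (u * - cj u' - - cj u * u'); split.
    rewrite !(rmorphM, rmorphB, rmorphN) /= ?hw ?hw' !conjCK ?rmorph_nat ?(w_muc gA).
    ring.
  + congr gg; rewrite !(rmorphM, rmorphB) /= ?hw ?hw' ?rmorph_nat ?(w_muc gA). ring.
Qed.

Lemma gen_base n (G : 'M[C]_n -> Prop) X : G X -> gen_real_lie G X.
Proof. by move=> h S _ hG; exact: hG. Qed.
Lemma gen_add n (G : 'M[C]_n -> Prop) X Y :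
  gen_real_lie G X -> gen_real_lie G Y -> gen_real_lie G (X + Y).
Proof.
move=> hX hY S hS hG; have [_ [hadd _]] := hS; apply: hadd; [exact: hX | exact: hY].
Qed.
Lemma gen_scale n (G : 'M[C]_n -> Prop) (r : R) X :
  gen_real_lie G X -> gen_real_lie G (r%:C *: X).
Proof.
move=> hX S hS hG; have [_ [_ [hsc _]]] := hS; apply: hsc; exact: hX.
Qed.

Definition fmap n (A : 'M[C]_n) (mu : C) (X : 'M[C]_n) : 'M[C]_2 :=
  gg (A2 mu) (\tr (X *m adjmx A) / trt A) (\tr (X *m A) / trt A)
     (\tr (X *m lie_br A (adjmx A)) / (2%:R * mu * trt A)).

Lemma fmap_g n (A : 'M[C]_n) mu u v w : good A mu ->
  fmap A mu (gg A u v w) = gg (A2 mu) u v w.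
Proof.
move=> gA; rewrite /fmap (w_trD gA) (w_trA gA) (w_trH gA).
have h : 2%:R * mu * trt A != 0.
  by rewrite !mulf_neq0 ?(w_trt gA) ?(w_mu0 gA) // pnatr_eq0.
by rewrite !mulfK ?(w_trt gA).
Qed.

Lemma fmap_lin n (A : 'M[C]_n) mu (r s : C) X Y :
  fmap A mu (r *: X + s *: Y) = r *: fmap A mu X + s *: fmap A mu Y.
Proof.
rewrite /fmap !gZ gD; congr gg; rewrite !mulmxDl -!scalemxAl raddfD /= !mxtraceZ; ring.
Qed.

End Aux.

Unset Implicit Arguments.

Theorem proposition2p26 (R : realType) (N : nat) (A : 'M[R[i]]_N) :
  sep_index_eq A 1 ->
  real_lie_iso
    (gen_real_lie (fun X => X = A - adjmx A \/
                            X = ('i)%C *: A + ('i)%C *: adjmx A \/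
                            X = ('i)%C *: lie_br A (adjmx A)))
    (@su2 R).
Proof.
move=> hI; have [mu [A0 AA ADA mg]] := key hI.
have gA : good A mu by split.
have gM := good2 mg.
set G := (fun X => _ \/ _).
set L := gen_real_lie G.
have g1 : A - adjmx A = gg A 1 (- Num.conj 1) 0.
  by rewrite /gg rmorph1 scale1r scaleN1r scale0r addr0.
have g2 : ('i)%C *: A + ('i)%C *: adjmx A = gg A 'i%C (- Num.conj 'i%C) 0.
  by rewrite /gg conj_iC opprK scale0r addr0.
have g3 : ('i)%C *: lie_br A (adjmx A) = gg A 0 (- Num.conj 0) 'i%C.
  by rewrite /gg rmorph0 oppr0 !scale0r !add0r.
have LS X : L X -> Sg A X.
  move=> LX; apply: LX; first exact: (Sg_sub gA).
  move=> Y [->|[->|->]].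
  - by rewrite g1; exists 1, 0; rewrite rmorph0 oppr0.
  - by rewrite g2; exists 'i%C, 0; rewrite rmorph0 oppr0.
  - by rewrite g3; exists 0, 'i%C; rewrite conj_iC.
have SL X : Sg A X -> L X.
  case=> u [w [hw ->]].
  case: u => a b; case: w hw => c0 c hw; rewrite !cdecomp in hw *.
  rewrite rmorphD rmorphM /= !conj_realC conj_iC in hw.
  have c00 : c0 = 0.
    by have := congr1 (@complex.Re R) hw; rewrite /= => h; lra.
  rewrite c00 rmorph0 add0r.
  have e : gg A (a%:C + 'i%C * b%:C) (- Num.conj (a%:C + 'i%C * b%:C)) ('i%C * c%:C) =
    a%:C *: (A - adjmx A) + b%:C *: ('i%C *: A + 'i%C *: adjmx A) +
    c%:C *: ('i%C *: lie_br A (adjmx A)).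
    rewrite g1 g2 g3 !gZ !gD; congr gg;
    rewrite ?rmorphD ?rmorphM ?rmorphN /= ?conj_realC ?conj_iC ?rmorph1 ?rmorph0; ring.
  rewrite e; apply: gen_add; [apply: gen_add|]; apply: gen_scale; apply: gen_base;
    rewrite /G; [left | right; left | right; right]; reflexivity.
exists (fmap A mu); split; [|split; [|split; [|split]]].
- move=> X /LS [u [w [hw ->]]]; rewrite (fmap_g _ _ _ gA); split.
  + rewrite /skew_herm adj_g -[RHS]scaleN1r gZ; congr gg; rewrite ?rmorphN /= ?conjCK ?hw; ring.
  + exact: (w_tr gM).
- move=> X Y /LS [u [w [hw ->]]] /LS [u' [w' [hw' ->]]].
  rewrite !(fmap_g _ _ _ gA) => /(w_inj gM) [-> _ ->] //.
- move=> Z /(su2_g mg) [u [w [hw ->]]].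
  exists (gg A u (- Num.conj u) w); split; last exact: (fmap_g _ _ _ gA).
  by apply: SL; exists u, w.
- by move=> r s X Y _ _; exact: fmap_lin.
- move=> X Y /LS [u [w [hw ->]]] /LS [u' [w' [hw' ->]]].
  by rewrite (w_br gA) !(fmap_g _ _ _ gA) (w_br gM).
Qed.
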